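(* Let $k\ge 2$, let $d:\chi^2\to[0,\infty)$ be a metric on a set $\chi$, and define $d_{\mathrm{HC}}:\chi^k\to[0,\infty)$ by $$d_{\mathrm{HC}}(p_1,\ldots,p_k)=\min_{\pi}\sum_{i=1}^{k} d\big(p_{\pi(i)},p_{\pi(i+1)}\big),$$ where the minimum is over all permutations $\pi$ of $\{1,\ldots,k\}$ and $\pi(k+1):=\pi(1)$ (i.e. the minimum cost of a Hamiltonian circuit through $p_1,\ldots,p_k$). Then $d_{\mathrm{HC}}$ is an $H$-metric with parameter $\gamma=1$.
   Context: For a multiset $S$ of elements of $\chi$, $elem(S)$ denotes the set of distinct elements of $S$. An $H$-metric with parameter $\gamma$ (where $\gamma$ is an integer with $1\le\gamma\le k-1$) is a function $d_H:\chi^k\to[0,\infty)$ satisfying: ($\Pi$) $d_H(p_1,\ldots,p_k)$ is invariant under permuting its arguments; ($O_D$) $d_H(p_1,\ldots,p_k)\ge 0$, with equality if and only if $p_1=\cdots=p_k$; ($\Delta_H$) for all $p_1,\ldots,p_k,a\in\chi$ and all $i\in\{1,\ldots,k\}$, $d_H(p_1,\ldots,p_k)\le d_H(p_1,\ldots,p_i,a,\ldots,a)+d_H(a,\ldots,a,p_{i+1},\ldots,p_k)$, where $a$ appears $k-i$ times in the first term and $i$ times in the second; ($\mathcal S_H$) for all $p_1,\ldots,p_k,p'_1,\ldots,p'_k\in\chi$: if $elem(\{p_1,\ldots,p_k\})\subsetneq elem(\{p'_1,\ldots,p'_k\})$ then $d_H(p_1,\ldots,p_k)\le d_H(p'_1,\ldots,p'_k)$,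 and if $elem(\{p_1,\ldots,p_k\})= elem(\{p'_1,\ldots,p'_k\})$ then $d_H(p_1,\ldots,p_k)\le \gamma\, d_H(p'_1,\ldots,p'_k)$. *)

(* Defs.v *)
From HB Require Import structures.
From mathcomp Require Import all_boot all_order all_algebra all_fingroup.
Set Implicit Arguments. Unset Strict Implicit. Unset Printing Implicit Defensive.
Import Order.TTheory GRing.Theory Num.Theory.
Local Open Scope ring_scope.

Definition is_metric (R : realFieldType) (chi : Type) (d : chi -> chi -> R) : Prop :=
  (forall x y, 0 <= d x y) /\
  (forall x y, d x y = 0 <-> x = y) /\
  (forall x y, d x y = d y x) /\
  (forall x y z, d x z <= d x y + d y z).

Definition elem (chi : Type) (k : nat) (p : 'I_k -> chi) : chi -> Prop :=
  fun x => exists i, p i = x.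

Definition is_Hmetric (R : realFieldType) (chi : Type) (k gamma : nat)
    (dH : ('I_k -> chi) -> R) : Prop :=
  [/\ (1 <= gamma <= k.-1)%N,
      (forall (p : 'I_k -> chi) (s : 'S_k), dH (fun j => p (s j)) = dH p),
      (forall p : 'I_k -> chi, 0 <= dH p /\
          (dH p = 0 <-> forall i j : 'I_k, p i = p j)),
      (forall (p : 'I_k -> chi) (a : chi) (i : nat), (1 <= i <= k)%N ->
          dH p <= dH (fun j : 'I_k => if (j < i)%N then p j else a)
                  + dH (fun j : 'I_k => if (j < i)%N then a else p j)) &
      (forall p p' : 'I_k -> chi,
          ((forall x, elem p x -> elem p' x) /\ (exists x, elem p' x /\ ~ elem p x)
             -> dH p <= dH p') /\
          ((forall x, elem p x <-> elem p' x) -> dH p <= gamma%:R * dH p'))].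

Definition hc_cost (R : realFieldType) (chi : Type) (d : chi -> chi -> R) (k : nat)
    (p : 'I_k -> chi) (s : 'S_k) : R :=
  \sum_(i < k) d (p (s i)) (p (s (ordS i))).

(* d_HC: minimum over all permutations (the seed hc_cost 1 is itself one of the terms). *)
Definition d_HC (R : realFieldType) (chi : Type) (d : chi -> chi -> R) (k : nat)
    (p : 'I_k -> chi) : R :=
  \big[Num.min/hc_cost d p 1%g]_(s : 'S_k) hc_cost d p s.

(* Main.v *)
Require Import Defs.
From HB Require Import structures.
From mathcomp Require Import all_boot all_order all_algebra all_fingroup.
From mathcomp Require Import zify lra.
From Stdlib Require Import IndefiniteDescription.
Import Order.TTheory GRing.Theory Num.Theory.
Set Implicit Arguments. Unset Strict Implicit.
Local Open Scope ring_scope.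

Definition Wc (R : realFieldType) (chi : Type) (d : chi -> chi -> R)
  (f : nat -> chi) (a b : nat) : R := \sum_(a <= n < b) d (f n) (f n.+1).

Lemma Wc_ge0 (R : realFieldType) (chi : Type) (d : chi -> chi -> R) f a b :
  is_metric d -> 0 <= Wc d f a b.
Proof. by case=> h0 _; apply: sumr_ge0 => n _; apply: h0. Qed.

Lemma Wc_split (R : realFieldType) (chi : Type) (d : chi -> chi -> R) f a b c :
  (a <= b)%N -> (b <= c)%N -> Wc d f a c = Wc d f a b + Wc d f b c.
Proof. by move=> h1 h2; rewrite /Wc (big_cat_nat h1 h2). Qed.

Lemma Wc_tri (R : realFieldType) (chi : Type) (d : chi -> chi -> R) f a b :
  is_metric d -> (a <= b)%N -> d (f a) (f b) <= Wc d f a b.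
Proof.
case=> h0 [h1 [h2 h3]]; elim: b => [|b IH].
  rewrite leqn0 => /eqP->; rewrite /Wc big_geq //.
  by have -> : d (f 0%N) (f 0%N) = 0 by apply/h1.
rewrite leq_eqVlt => /orP[/eqP->|hab].
  rewrite /Wc big_geq //; by have -> : d (f b.+1) (f b.+1) = 0 by apply/h1.
rewrite (@Wc_split _ _ _ _ _ b) // /Wc big_nat1.
apply: le_trans (h3 _ (f b) _) _; apply: lerD => //; exact: IH.
Qed.

Lemma Wc_chain (R : realFieldType) (chi : Type) (d : chi -> chi -> R) f
  (a : nat -> nat) n : is_metric d -> (forall j, (j < n)%N -> (a j <= a j.+1)%N) ->
  \sum_(0 <= j < n) d (f (a j)) (f (a j.+1)) <= Wc d f (a 0%N) (a n).
Proof.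
move=> hd; elim: n => [|n IH] ha.
  by rewrite big_geq // Wc_ge0.
have mono : forall j, (j <= n)%N -> (a 0%N <= a j)%N.
  elim=> [//|j IHj] hj; apply: leq_trans (IHj (ltnW hj)) (ha _ _); lia.
rewrite big_nat_recr //= (@Wc_split _ _ _ _ _ (a n)) ?mono ?ha //.
apply: lerD; first by apply: IH => j hj; apply: ha; lia.
rewrite /Wc.
have := @Wc_tri _ _ d f (a n) (a n.+1) hd (ha n (ltnSn n)); done.
Qed.

Definition tourf (chi : Type) (k : nat) (p : 'I_k.+1 -> chi) (s : 'S_k.+1) (n : nat) : chi :=
  p (s (inord (n %% k.+1))).

Lemma tourf_small (chi : Type) (k : nat) (p : 'I_k.+1 -> chi) (s : 'S_k.+1) (j : 'I_k.+1) :
  tourf p s j = p (s j).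
Proof. by rewrite /tourf modn_small // inord_val. Qed.

Lemma tourf_per (chi : Type) (k : nat) (p : 'I_k.+1 -> chi) (s : 'S_k.+1) n :
  tourf p s (n + k.+1) = tourf p s n.
Proof. by rewrite /tourf modnDr. Qed.

Lemma hc_tour (R : realFieldType) (chi : Type) (d : chi -> chi -> R) k
  (p : 'I_k.+1 -> chi) (s : 'S_k.+1) : hc_cost d p s = Wc d (tourf p s) 0 k.+1.
Proof.
rewrite /hc_cost /Wc big_mkord; apply: eq_bigr => i _.
rewrite tourf_small /tourf; congr (d _ (p (s _))).
by apply: val_inj; rewrite /= inordK // ltn_pmod.
Qed.

Lemma dHC_le (R : realFieldType) (chi : Type) (d : chi -> chi -> R) k
  (p : 'I_k -> chi) (s : 'S_k) : d_HC d p <= hc_cost d p s.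
Proof. by rewrite /d_HC (bigD1 s) //= ge_min lexx. Qed.

Lemma dHC_att (R : realFieldType) (chi : Type) (d : chi -> chi -> R) k
  (p : 'I_k -> chi) : exists s, d_HC d p = hc_cost d p s.
Proof.
rewrite /d_HC; apply: (big_ind (fun x => exists s, x = hc_cost d p s)).
- by exists 1%g.
- move=> x y [s1 ->] [s2 ->]; case: (lerP (hc_cost d p s1) (hc_cost d p s2)) => h.
    by exists s1.
  by exists s2.
- by move=> s _; exists s.
Qed.

Lemma Lwalk (R : realFieldType) (chi : Type) (d : chi -> chi -> R) k
  (p : 'I_k.+1 -> chi) (f : nat -> chi) (m : nat) : is_metric d ->
  f m = f 0%N -> (forall i, exists n, (n <= m)%N /\ f n = p i) ->
  d_HC d p <= Wc d f 0 m.
Proof.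
move=> hd fm cov.
pose g i := proj1_sig (constructive_indefinite_description _ (cov i)).
have gP i : (g i <= m)%N /\ f (g i) = p i := proj2_sig (constructive_indefinite_description _ (cov i)).
pose r := fun i j : 'I_k.+1 => (g i <= g j)%N.
pose t := sort r (enum 'I_k.+1).
have tperm : perm_eq t (enum 'I_k.+1) by rewrite /t perm_sort.
have tsize : size t = k.+1 by rewrite (perm_size tperm) size_enum_ord.
have tuniq : uniq t by rewrite (perm_uniq tperm) enum_uniq.
have tsorted : sorted r t by apply: sort_sorted => x y; exact: leq_total.
pose sf := fun j : 'I_k.+1 => nth ord0 t j.
have sinj : injective sf.
  move=> x y /eqP; rewrite /sf nth_uniq ?tsize // => /eqP; exact: val_inj.
pose s := perm sinj.
apply: (le_trans (dHC_le d p s)); rewrite hc_tour.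
pose a j := g (s (inord j)).
have fa j : (j <= k)%N -> tourf p s j = f (a j).
  move=> hj; rewrite /a (proj2 (gP _)) /tourf modn_small //.
have amono j : (j < k)%N -> (a j <= a j.+1)%N.
  move=> hj; rewrite /a !permE /sf !inordK //; last by lia.
  apply: (sorted_leq_nth _ _ ord0 tsorted) => //=; rewrite ?inE ?tsize //; try lia.
  - by move=> x y z; exact: leq_trans.
  - by move=> x; exact: leqnn.
have hm j : (a j <= m)%N by exact: (proj1 (gP _)).
rewrite /Wc big_nat_recr //=.
have -> : tourf p s k.+1 = f (a 0%N) by rewrite -(fa 0%N) // /tourf modnn.
rewrite (fa k) //.
have -> : \sum_(0 <= i < k) d (tourf p s i) (tourf p s i.+1) =
          \sum_(0 <= i < k) d (f (a i)) (f (a i.+1)).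
  by apply: eq_big_nat => i /andP[_ hi]; rewrite !fa //; lia.
have h1 := Wc_chain f hd amono.
have ha0k : (a 0%N <= a k)%N.
  have : forall j, (j <= k)%N -> (a 0%N <= a j)%N.
    elim=> [//|j IHj] hj; apply: leq_trans (IHj (ltnW hj)) (amono _ _); lia.
  by apply.
have h2 := Wc_tri f hd (hm k).
have h3 := Wc_tri f hd (leq0n (a 0%N)).
case: hd => h0 [_ [hsym htr]].
have h4 := htr (f (a k)) (f m) (f (a 0%N)).
rewrite fm in h4.
rewrite fm in h2.
have e1 := (@Wc_split _ _ d f 0 (a 0%N) m (leq0n _) (leq_trans ha0k (hm k))).
have e2 := (@Wc_split _ _ d f (a 0%N) (a k) m ha0k (hm k)).
rewrite /Wc in h1 h2 h3 e1 e2 *. lra.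
Qed.

Lemma dHC_mono (R : realFieldType) (chi : Type) (d : chi -> chi -> R) k
  (p q : 'I_k.+1 -> chi) : is_metric d ->
  (forall x, elem p x -> elem q x) -> d_HC d p <= d_HC d q.
Proof.
move=> hd hpq; have [s ->] := dHC_att d q; rewrite hc_tour.
apply: Lwalk => //.
  by rewrite /tourf modnn mod0n.
move=> i; have [j hj] := hpq (p i) (ex_intro _ i erefl).
exists (s^-1 j)%g; split; first exact: ltnW.
by rewrite tourf_small permKV.
Qed.

Lemma dHC_ext (R : realFieldType) (chi : Type) (d : chi -> chi -> R) k
  (p q : 'I_k.+1 -> chi) : is_metric d ->
  (forall j, p j = q j) -> d_HC d p = d_HC d q.
Proof.
move=> hd h; apply/le_anti/andP; split; apply: dHC_mono => // x [i <-].
  by exists i.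
by exists i.
Qed.

Lemma Wc_rot (R : realFieldType) (chi : Type) (d : chi -> chi -> R) f K r :
  (r <= K)%N -> (forall n, f (n + K)%N = f n) ->
  Wc d (fun n => f (n + r)%N) 0 K = Wc d f 0 K.
Proof.
move=> hr hp.
rewrite (@Wc_split _ _ d f 0 r K) // addrC.
rewrite /Wc (@big_cat_nat _ _ _ (K - r)) //=; last exact: leq_subr.
congr (_ + _).
  symmetry; rewrite (big_addn 0 K r).
  by apply: eq_big_nat => n _; rewrite addSn.
rewrite (big_addn 0 K (K - r)).
have -> : (K - (K - r) = r)%N by lia.
apply: eq_big_nat => n _.
have -> : (n + (K - r) + r = n + K)%N by lia.
have -> : ((n + (K - r)).+1 + r = n.+1 + K)%N by lia.
by rewrite !hp.
Qed.

Lemma cover_rot (chi : Type) (f : nat -> chi) K r x :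
  (r < K)%N -> (x < K)%N -> (forall n, f (n + K)%N = f n) ->
  exists n, (n <= K)%N /\ f (n + r)%N = f x.
Proof.
move=> hr hx hp; case: (leqP r x) => h.
  by exists (x - r)%N; split; [lia | rewrite subnK].
exists (x + K - r)%N; split; first lia.
by rewrite subnK ?hp //; lia.
Qed.

Theorem proposition2 (R : realFieldType) (chi : Type) (k : nat)
    (d : chi -> chi -> R) :
  (2 <= k)%N -> is_metric d -> is_Hmetric 1%N (d_HC d (k:=k)).
Proof.
case: k => [//|k] hk hd.
have hd' := hd; case: hd' => h0 [h1 [hsym htr]].
have nonneg : forall p : 'I_k.+1 -> chi, 0 <= d_HC d p.
  by move=> p; have [s ->] := dHC_att d p; rewrite hc_tour Wc_ge0.
split.
- by apply/andP; split => //=; lia.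
- move=> p s; apply/le_anti/andP; split; apply: dHC_mono => // x [i <-].
    by exists (s i).
  by exists (s^-1 i)%g; rewrite permKV.
- move=> p; split; first exact: nonneg.
  split.
    move=> hz.
    have [s hs] := dHC_att d p; rewrite hz hc_tour in hs.
    have key : forall n, (n <= k.+1)%N -> tourf p s n = tourf p s 0.
      move=> n hn.
      have t1 := Wc_tri (tourf p s) hd (leq0n n).
      have t2 := @Wc_split _ _ d (tourf p s) 0 n k.+1 (leq0n _) hn.
      have t3 := @Wc_ge0 _ _ d (tourf p s) n k.+1 hd.
      have t4 := h0 (tourf p s 0) (tourf p s n).
      apply/esym/h1; apply/le_anti/andP; split => //; lra.
    have pi : forall i, p i = tourf p s 0.
      move=> i; rewrite -(key (s^-1 i)%g); last exact: (ltnW (ltn_ord (s^-1 i)%g)).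
      by rewrite tourf_small permKV.
    by move=> i j; rewrite !pi.
  move=> hall; apply/le_anti/andP; split; last exact: nonneg.
  apply: le_trans (dHC_le d p 1%g) _.
  rewrite /hc_cost big1 // => i _.
  by rewrite !perm1 (hall i (ordS i)); apply/h1.
- move=> p a i /andP[hi1 hik].
  set P1 := (fun j : 'I_k.+1 => if (j < i)%N then p j else a).
  set P2 := (fun j : 'I_k.+1 => if (j < i)%N then a else p j).
  case: (ltnP i k.+1) => hik'; last first.
    have -> : d_HC d P1 = d_HC d p.
      apply: dHC_ext => // j; rewrite /P1 (leq_trans (ltn_ord j) hik') //.
    by rewrite lerDl nonneg.
  have [s1 ->] := dHC_att d P1; have [s2 ->] := dHC_att d P2.
  rewrite !hc_tour.
  set f1 := tourf P1 s1; set f2 := tourf P2 s2.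
  set K := k.+1.
  pose r1 := nat_of_ord (s1^-1 ord_max)%g.
  pose r2 := nat_of_ord (s2^-1 ord0)%g.
  have f1a : f1 r1 = a.
    by rewrite /f1 /r1 tourf_small permKV /P1 /=; case: ltnP => //; lia.
  have f2a : f2 r2 = a.
    by rewrite /f2 /r2 tourf_small permKV /P2 /=; case: ltnP => //; lia.
  have p1 : forall n, f1 (n + K)%N = f1 n by move=> n; exact: tourf_per.
  have p2 : forall n, f2 (n + K)%N = f2 n by move=> n; exact: tourf_per.
  pose g1 := fun n => f1 (n + r1)%N.
  pose g2 := fun n => f2 (n + r2)%N.
  have g1K : g1 K = a by rewrite /g1 addnC p1.
  have g20 : g2 0%N = a by rewrite /g2 add0n.
  have g2K : g2 K = a by rewrite /g2 addnC p2.
  pose F := fun n => if (n <= K)%N then g1 n else g2 (n - K)%N.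
  have Flo : forall n, (n <= K)%N -> F n = g1 n by move=> n hn; rewrite /F hn.
  have Fhi : forall n, (n <= K)%N -> F (n + K)%N = g2 n.
    case=> [|n] hn; first by rewrite /F add0n leqnn g1K g20.
    by rewrite /F; case: ifP => h; [lia | rewrite addnK].
  have r1K : (r1 < K)%N by exact: ltn_ord.
  have r2K : (r2 < K)%N by exact: ltn_ord.
  have eF : Wc d F 0 (K + K) = Wc d g1 0 K + Wc d g2 0 K.
    rewrite (@Wc_split _ _ d F 0 K) ?leq_addr //; congr (_ + _).
      by apply: eq_big_nat => n /andP[_ hn]; rewrite !Flo //; lia.
    rewrite /Wc (big_addn 0 (K + K) K) addnK.
    by apply: eq_big_nat => n /andP[_ hn]; rewrite -addSn !Fhi // ltnW.
  rewrite -(Wc_rot d (ltnW r1K) p1) -(Wc_rot d (ltnW r2K) p2) -/g1 -/g2 -eF.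
  apply: Lwalk => //.
    by rewrite Fhi // Flo // g2K /g1 add0n f1a.
  move=> j; case: (ltnP j i) => hj.
    have [n [hn e]] := cover_rot r1K (ltn_ord (s1^-1 j)%g) p1.
    exists n; split; first lia.
    by rewrite Flo // /g1 e /f1 tourf_small permKV /P1 hj.
  have [n [hn e]] := cover_rot r2K (ltn_ord (s2^-1 j)%g) p2.
  exists (n + K)%N; split; first lia.
  by rewrite Fhi // /g2 e /f2 tourf_small permKV /P2 ltnNge hj.
- move=> p p'; split.
    by case=> hsub _; apply: dHC_mono.
  by move=> heq; rewrite mul1r; apply: dHC_mono => // x /heq.
Qed.
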